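(* Let $a,b>0$ and let $H=\frac12 f(p^2-a^2x^2,q^2-b^2y^2)$ on $\mathbb{R}^4$ (coordinates $(x,y,p,q)$), where $f$ is smooth with $f(0,0)=0$, $f_u(0,0)=f_v(0,0)=1$. Let $\mathbf v_1=(1,0,a,0)$, $\mathbf v_2=(0,1,0,-b)$, $\mathbf v_3=(1,0,-a,0)$, $\mathbf v_4=(0,1,0,b)$, and let $\phi_\pm:\mathbb{R}\to\mathbb{R}$ be $C^k$ ($k\ge1$) functions vanishing to order $l\le k$ at $0$. Then there are unique functions $\psi_\pm$ defined near $0$ such that the curves $\gamma_\pm(s)=s\mathbf v_1\pm s\mathbf v_2+\phi_\pm(s)\mathbf v_3+\psi_\pm(s)\mathbf v_4$ satisfy $H(\gamma_\pm(s))\equiv0$. Moreover $\psi_\pm$ are $C^k$ and vanish to order $l$ at $0$. In the case $H=\frac12(p^2+q^2-a^2x^2-b^2y^2)$, $\psi_\pm=\mp\frac{a^2}{b^2}\phi_\pm$.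
   Context: A function $\phi$ vanishes to order $l$ at $0$ ($l$ real) if $\phi(s)=\bar\phi(s)s^l$ with $\bar\phi$ $C^k$ on $\mathbb{R}\setminus\{0\}$ and $\frac{d^j}{ds^j}\bar\phi$ bounded on $[-1,1]\setminus\{0\}$ for $0\le j\le l$. *)

(* Defs.v *)
From Stdlib Require Import Reals Lra.
From Coquelicot Require Import Coquelicot.
Open Scope R_scope.

Record R4 := mk4 { cx : R; cy : R; cp : R; cq : R }.
Definition add4 (u v : R4) : R4 :=
  mk4 (cx u + cx v) (cy u + cy v) (cp u + cp v) (cq u + cq v).
Definition scal4 (c : R) (u : R4) : R4 :=
  mk4 (c * cx u) (c * cy u) (c * cp u) (c * cq u).

Definition v1 (a b : R) : R4 := mk4 1 0 a 0.
Definition v2 (a b : R) : R4 := mk4 0 1 0 (- b).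
Definition v3 (a b : R) : R4 := mk4 1 0 (- a) 0.
Definition v4 (a b : R) : R4 := mk4 0 1 0 b.

Definition H (a b : R) (f : R -> R -> R) (z : R4) : R :=
  / 2 * f (cp z ^ 2 - a ^ 2 * cx z ^ 2) (cq z ^ 2 - b ^ 2 * cy z ^ 2).

(* gamma(s) = s v1 + sigma s v2 + phi(s) v3 + psi(s) v4, sigma = +1 or -1 *)
Definition gamma (a b sigma : R) (phi psi : R -> R) (s : R) : R4 :=
  add4 (add4 (scal4 s (v1 a b)) (scal4 (sigma * s) (v2 a b)))
       (add4 (scal4 (phi s) (v3 a b)) (scal4 (psi s) (v4 a b))).

Fixpoint C2n (n : nat) (f : R -> R -> R) : Prop :=
  match n with
  | O => forall x y, continuity_2d_pt f x y
  | S m =>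
      (forall x y, ex_derive (fun t => f t y) x /\ ex_derive (fun t => f x t) y)
      /\ C2n m (fun x y => Derive (fun t => f t y) x)
      /\ C2n m (fun x y => Derive (fun t => f x t) y)
  end.

Definition smooth2 (f : R -> R -> R) : Prop := forall n, C2n n f.

Definition Ck_on (k : nat) (U : R -> Prop) (g : R -> R) : Prop :=
  forall x, U x ->
    (forall j, (j <= k)%nat -> ex_derive_n g j x) /\ continuous (Derive_n g k) x.

(* The paper's definition: phi vanishes to order l at 0 (k from context).
   s^l is read as |s|^l. *)
Definition vanishes_to_order (k : nat) (l : R) (phi : R -> R) : Prop :=
  exists phib : R -> R,
    Ck_on k (fun s => s <> 0) phib /\
    (forall s, s <> 0 -> phi s = phib s * Rpower (Rabs s) l) /\
    (forall j : nat, INR j <= l ->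
       exists M, forall s, -1 <= s <= 1 -> s <> 0 -> Rabs (Derive_n phib j s) <= M).

Definition vanishes_to_order_near (k : nat) (l delta : R) (psi : R -> R) : Prop :=
  exists psib : R -> R,
    Ck_on k (fun s => 0 < Rabs s < delta) psib /\
    (forall s, 0 < Rabs s < delta -> psi s = psib s * Rpower (Rabs s) l) /\
    (forall j : nat, INR j <= l ->
       exists M, forall s, 0 < Rabs s < delta -> Rabs s <= 1 ->
         Rabs (Derive_n psib j s) <= M).

(* Main.v *)
Require Import Defs.
From Stdlib Require Import Reals.
From Coquelicot Require Import Coquelicot.
From Stdlib Require Import ClassicalEpsilon.
From Stdlib Require Import Reals Lra Lia FunctionalExtensionality.
From Coquelicot Require Import Coquelicot.
Open Scope R_scope.

Definition opn (I : R -> Prop) := forall x, I x -> exists e : posreal, forall y, Rabs (y - x) < e -> I y.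
Definition good (I J : R -> Prop) := opn I /\ (forall x, J x -> I x).
Definition bnd (J : R -> Prop) (h : R -> R) := exists M, forall x, J x -> Rabs (h x) <= M.
Definition NoJ : R -> Prop := fun _ => False.

Fixpoint Cn (n : nat) (I J : R -> Prop) (h : R -> R) : Prop :=
  match n with
  | O => (forall x, I x -> continuous h x) /\ bnd J h
  | S m => (forall x, I x -> ex_derive h x) /\ bnd J h /\ Cn m I J (Derive h)
  end.

Lemma loc_of_opn I x : opn I -> I x -> locally x I.
Proof. intros HI Hx. destruct (HI x Hx) as [e He]. exists e. intros y Hy. apply He. exact Hy. Qed.

Lemma locally_abs x (P : R -> Prop) : locally x P -> exists e : posreal, forall y, Rabs (y - x) < e -> P y.
Proof. intros [e He]. exists e. intros y Hy. apply He. exact Hy. Qed.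

Lemma bnd_NoJ h : bnd NoJ h.
Proof. exists 0. intros x []. Qed.

Lemma bnd_mono J J' h : (forall x, J' x -> J x) -> bnd J h -> bnd J' h.
Proof. intros H [M HM]. exists M. auto. Qed.

Lemma bnd_ext J h1 h2 : (forall x, J x -> h1 x = h2 x) -> bnd J h1 -> bnd J h2.
Proof. intros H [M HM]. exists M. intros x Hx. rewrite <- H by auto. auto. Qed.

Lemma bnd_plus J h1 h2 : bnd J h1 -> bnd J h2 -> bnd J (fun x => h1 x + h2 x).
Proof. intros [M1 H1] [M2 H2]. exists (M1 + M2). intros x Hx.
  eapply Rle_trans. apply Rabs_triang. specialize (H1 x Hx); specialize (H2 x Hx); lra. Qed.

Lemma bnd_mult J h1 h2 : bnd J h1 -> bnd J h2 -> bnd J (fun x => h1 x * h2 x).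
Proof. intros [M1 H1] [M2 H2]. exists (Rabs M1 * Rabs M2). intros x Hx.
  rewrite Rabs_mult. specialize (H1 x Hx); specialize (H2 x Hx).
  apply Rmult_le_compat; try apply Rabs_pos.
  eapply Rle_trans; [exact H1| apply RRle_abs].
  eapply Rle_trans; [exact H2| apply RRle_abs]. Qed.

Lemma bnd_const J c : bnd J (fun _ => c).
Proof. exists (Rabs c). intros; lra. Qed.

Lemma exd_cont (h : R -> R) x : ex_derive h x -> continuous h x.
Proof. intros H. exact (ex_derive_continuous h x H). Qed.

Lemma Cn_cont n I J h x : Cn n I J h -> I x -> continuous h x.
Proof. destruct n; simpl; intros H Hx.
  - apply H; auto.
  - apply exd_cont. apply H; auto. Qed.

Lemma Cn_bnd n I J h : Cn n I J h -> bnd J h.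
Proof. destruct n; simpl; tauto. Qed.

Lemma Cn_S n I J h : Cn (S n) I J h -> Cn n I J h.
Proof. revert h; induction n; intros h H.
  - destruct H as [Hd [Hb _]]. split; auto. intros; apply exd_cont; auto.
  - destruct H as [Hd [Hb Hc]]. split; [auto|split; auto]. Qed.

Lemma Cn_le m n I J h : (m <= n)%nat -> Cn n I J h -> Cn m I J h.
Proof. induction 1; auto. intros H0; apply IHle; apply Cn_S; auto. Qed.

Lemma Cn_mono n I I' J J' h : (forall x, I' x -> I x) -> (forall x, J' x -> J x) -> Cn n I J h -> Cn n I' J' h.
Proof. intros HI HJ. revert h; induction n; simpl; intros h HH; rename HH into H.
  - destruct H; split; [auto|]. eapply bnd_mono; eauto.
  - destruct H as [Hd [Hb Hc]]. split; [auto|split; auto]. eapply bnd_mono; eauto. Qed.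

Lemma Cn_ext n I J h1 h2 : good I J -> (forall x, I x -> h1 x = h2 x) -> Cn n I J h1 -> Cn n I J h2.
Proof. intros [HI HJ]. revert h1 h2; induction n; simpl; intros h1 h2 He H.
  - destruct H as [Hc Hb]; split.
    + intros x Hx. apply (continuous_ext_loc h2 h1 x). 
      generalize (loc_of_opn I x HI Hx). apply filter_imp. auto. auto.
    + eapply bnd_ext; [|exact Hb]. auto.
  - destruct H as [Hd [Hb Hc]]. split; [|split].
    + intros x Hx. apply (ex_derive_ext_loc h1).
      generalize (loc_of_opn I x HI Hx). apply filter_imp. auto. auto.
    + eapply bnd_ext; [|exact Hb]. auto.
    + apply (IHn (Derive h1)); auto. intros x Hx. apply Derive_ext_loc.
      generalize (loc_of_opn I x HI Hx). apply filter_imp. auto. Qed.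

Lemma Derive_n_Sf n h : Derive_n h (S n) = Derive_n (Derive h) n.
Proof. apply functional_extensionality. revert h. induction n; intros h x. reflexivity.
  change (Derive_n h (S (S n)) x) with (Derive (Derive_n h (S n)) x).
  rewrite (Derive_ext (Derive_n h (S n)) (Derive_n (Derive h) n)). reflexivity.
  intros; apply IHn. Qed.

Lemma Cn_flat n I J h : Cn n I J h <->
  ((forall j x, (j < n)%nat -> I x -> ex_derive (Derive_n h j) x) /\
   (forall x, I x -> continuous (Derive_n h n) x) /\
   (forall j, (j <= n)%nat -> bnd J (Derive_n h j))).
Proof. revert h; induction n; intros h; cbn [Cn].
  - split.
    + intros [Hc Hb]. split; [intros; lia|split; auto]. intros j Hj. replace j with 0%nat by lia. exact Hb.
    + intros [_ [Hc Hb]]. split; auto. apply (Hb 0%nat). lia.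
  - rewrite IHn. split.
    + intros [Hd [Hb [H1 [H2 H3]]]]. split; [|split].
      * intros [|j] x Hj Hx. apply Hd; auto. rewrite Derive_n_Sf. apply H1; auto; lia.
      * intros x Hx. rewrite Derive_n_Sf. auto.
      * intros [|j] Hj. exact Hb. rewrite Derive_n_Sf. apply H3. lia.
    + intros [H1 [H2 H3]]. split; [|split; [|split; [|split]]].
      * intros x Hx. apply (H1 0%nat); auto; lia.
      * apply (H3 0%nat). lia.
      * intros j x Hj Hx. rewrite <- Derive_n_Sf. apply H1; auto; lia.
      * intros x Hx. rewrite <- Derive_n_Sf. auto.
      * intros j Hj. rewrite <- Derive_n_Sf. apply H3. lia.
Qed.
Lemma Cn_const n I J c : Cn n I J (fun _ => c).
Proof. revert c; induction n; intros c; cbn [Cn].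
  - split. intros; apply continuous_const. apply bnd_const.
  - split; [|split]. intros; apply ex_derive_const. apply bnd_const.
    replace (Derive (fun _ : R => c)) with (fun _ : R => 0). apply IHn.
    apply functional_extensionality; intros; rewrite Derive_const; auto. Qed.

Lemma Cn_id n I : Cn n I NoJ (fun x => x).
Proof. destruct n; cbn [Cn].
  - split. intros; apply continuous_id. apply bnd_NoJ.
  - split; [|split]. intros; apply ex_derive_id. apply bnd_NoJ.
    replace (Derive (fun x : R => x)) with (fun _ : R => 1). apply Cn_const.
    apply functional_extensionality; intros; symmetry; apply (Derive_id x). Qed.

Lemma Cn_plus n I J h1 h2 : good I J -> Cn n I J h1 -> Cn n I J h2 -> Cn n I J (fun x => h1 x + h2 x).
Proof. intros G. revert h1 h2; induction n; intros h1 h2; cbn [Cn].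
  - intros [C1 B1] [C2 B2]. split. intros x Hx. apply (continuous_plus h1 h2); auto. apply bnd_plus; auto.
  - intros [D1 [B1 C1]] [D2 [B2 C2]]. split; [|split].
    + intros x Hx. apply (ex_derive_plus h1 h2); auto.
    + apply bnd_plus; auto.
    + apply (Cn_ext n I J (fun x => Derive h1 x + Derive h2 x)); auto.
      intros x Hx. rewrite Derive_plus; auto.
Qed.

Lemma Cn_mult n I J h1 h2 : good I J -> Cn n I J h1 -> Cn n I J h2 -> Cn n I J (fun x => h1 x * h2 x).
Proof. intros G. revert h1 h2; induction n; intros h1 h2.
  - cbn [Cn]. intros [C1 B1] [C2 B2]. split. intros x Hx. apply (continuous_mult h1 h2); auto. apply bnd_mult; auto.
  - intros H1 H2. pose proof (Cn_S _ _ _ _ H1) as H1'. pose proof (Cn_S _ _ _ _ H2) as H2'.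
    destruct H1 as [D1 [B1 C1]]; destruct H2 as [D2 [B2 C2]]. split; [|split].
    + intros x Hx. apply (ex_derive_mult h1 h2); auto.
    + apply bnd_mult; auto.
    + apply (Cn_ext n I J (fun x => Derive h1 x * h2 x + h1 x * Derive h2 x)); auto.
      intros x Hx. rewrite Derive_mult; auto.
      apply Cn_plus; auto.
Qed.

Lemma Cn_scal n I J c h : good I J -> Cn n I J h -> Cn n I J (fun x => c * h x).
Proof. intros G H. apply Cn_mult; auto. apply Cn_const. Qed.

Lemma Cn_inv n I h : opn I -> Cn n I NoJ h -> (forall x, I x -> h x <> 0) -> Cn n I NoJ (fun x => / h x).
Proof. intros O. assert (G : good I NoJ) by (split; auto; intros x []).
  revert h; induction n; intros h H Hn.
  - cbn [Cn]. destruct H as [C B]. split; [|apply bnd_NoJ]. intros x Hx.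
    apply continuity_pt_filterlim. apply continuity_pt_inv. apply continuity_pt_filterlim. apply C; auto. auto.
  - pose proof (Cn_S _ _ _ _ H) as H'. destruct H as [D [B C]]. split; [|split].
    + intros x Hx. apply ex_derive_inv; auto.
    + apply bnd_NoJ.
    + apply (Cn_ext n I NoJ (fun x => - Derive h x * (/ h x * / h x))); auto.
      intros x Hx. rewrite Derive_inv; auto. field. auto.
      apply Cn_mult; auto. apply (Cn_scal n I NoJ (-1) (Derive h)) in C; auto.
      eapply Cn_ext; [exact G| |exact C]. intros; cbv beta; ring.
      apply Cn_mult; auto.
Qed.

Lemma Cn_comp n I0 I m u : opn I -> opn I0 -> Cn n I0 NoJ m -> Cn n I NoJ u -> (forall x, I x -> I0 (u x)) ->
  Cn n I NoJ (fun x => m (u x)).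
Proof. intros O O0 Hm Hu Hmap. assert (G : good I NoJ) by (split; auto; intros x []).
  revert m u Hm Hu Hmap; induction n; intros m u Hm Hu Hmap.
  - cbn [Cn] in *. destruct Hm as [Cm _]; destruct Hu as [Cu _]. split; [|apply bnd_NoJ].
    intros x Hx. apply (continuous_comp u m); auto.
  - pose proof (Cn_S _ _ _ _ Hm) as Hm'. pose proof (Cn_S _ _ _ _ Hu) as Hu'.
    destruct Hm as [Dm [_ Cm]]; destruct Hu as [Du [_ Cu]]. split; [|split].
    + intros x Hx. apply (ex_derive_comp m u); auto.
    + apply bnd_NoJ.
    + apply (Cn_ext n I NoJ (fun x => Derive m (u x) * Derive u x)); auto.
      intros x Hx. rewrite (Derive_comp m u x); auto. cbv beta; ring.
      apply Cn_mult; auto.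
Qed.

Lemma Cn_compact n I a b h : opn I -> (forall x, a <= x <= b -> I x) -> Cn n I NoJ h -> Cn n I (fun x => a <= x <= b) h.
Proof. intros O Hab. revert h; induction n; intros h H.
  - destruct (Rle_or_lt a b) as [Hle|Hlt].
    + destruct H as [C _]. split; auto.
      destruct (continuity_ab_maj (fun x => Rabs (h x)) a b Hle) as [Mx [HM _]].
      intros c Hc. apply continuity_pt_filterlim. apply (continuous_comp h Rabs). apply C. auto.
      apply continuity_pt_filterlim. apply Rcontinuity_abs.
      exists (Rabs (h Mx)). auto.
    + destruct H as [C _]. split; auto. exists 0. intros x Hx; lra.
  - pose proof (IHn h (Cn_S _ _ _ _ H)) as H0. destruct H as [D [_ C]]. split; [auto|split].
    apply (Cn_bnd _ _ _ _ H0). apply IHn; auto.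
Qed.
Definition d1 (F : R -> R -> R) := fun x y => Derive (fun t => F t y) x.
Definition d2 (F : R -> R -> R) := fun x y => Derive (fun t => F x t) y.

Lemma sm_d1 F : smooth2 F -> smooth2 (d1 F).
Proof. intros H n. exact (proj1 (proj2 (H (S n)))). Qed.
Lemma sm_d2 F : smooth2 F -> smooth2 (d2 F).
Proof. intros H n. exact (proj2 (proj2 (H (S n)))). Qed.
Lemma sm_cont F x y : smooth2 F -> continuity_2d_pt F x y.
Proof. intros H. exact (H O x y). Qed.
Lemma sm_ex1 F x y : smooth2 F -> ex_derive (fun t => F t y) x.
Proof. intros H. exact (proj1 (proj1 (H 1%nat) x y)). Qed.
Lemma sm_ex2 F x y : smooth2 F -> ex_derive (fun t => F x t) y.
Proof. intros H. exact (proj2 (proj1 (H 1%nat) x y)). Qed.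

Lemma sm_diffn n : forall F x y, smooth2 F -> ex_diff_n F n x y.
Proof. induction n; intros F x y H; simpl.
  - split; auto. apply sm_cont; auto.
  - split; [apply sm_cont; auto|]. split; [apply sm_ex1; auto|]. split; [apply sm_ex2; auto|].
    split. apply (IHn (d1 F)). apply sm_d1; auto. apply (IHn (d2 F)). apply sm_d2; auto. Qed.

Lemma DL_pol1 f x y du dv : DL_pol 1 f x y du dv = f x y + Derive (fun t => f t y) x * du + Derive (fun t => f x t) y * dv.
Proof. unfold DL_pol. simpl. unfold differential, partial_derive. simpl. unfold Binomial.C. simpl. field. Qed.

Lemma sm_diff F x y : smooth2 F -> differentiable_pt_lim F x y (d1 F x y) (d2 F x y).
Proof. intros H.
  assert (HL : locally_2d (fun u v => ex_diff_n F 2 u v) x y).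
  { exists (mkposreal 1 Rlt_0_1). intros; apply sm_diffn; auto. }
  destruct (Taylor_Lagrange_2d F 1 x y HL) as [D [d1' Hd]].
  intros eps. assert (Hp : 0 < eps / (Rabs D + 1)).
  { apply Rdiv_lt_0_compat. apply cond_pos. pose proof (Rabs_pos D); lra. }
  exists (mkposreal _ (Rmin_pos _ _ (cond_pos d1') Hp)). simpl. intros u v Hu Hv.
  pose proof (Rmin_l d1' (eps / (Rabs D + 1))) as Hm1.
  pose proof (Rmin_r d1' (eps / (Rabs D + 1))) as Hm2.
  specialize (Hd u v ltac:(lra) ltac:(lra)). rewrite DL_pol1 in Hd. unfold d1, d2.
  set (m := Rmax (Rabs (u - x)) (Rabs (v - y))) in *.
  assert (Hm0 : 0 <= m) by (unfold m; eapply Rle_trans; [apply Rabs_pos|apply Rmax_l]).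
  assert (Hmlt : m < eps / (Rabs D + 1)) by (unfold m; apply Rmax_lub_lt; lra).
  assert (HDm : Rabs D * m <= eps).
  { assert (Rabs D * m <= Rabs D * (eps / (Rabs D + 1))) by (apply Rmult_le_compat_l; [apply Rabs_pos|lra]).
    assert (Rabs D * (eps / (Rabs D + 1)) <= eps).
    { unfold Rdiv. rewrite <- Rmult_assoc. apply (Rmult_le_reg_r (Rabs D + 1)). pose proof (Rabs_pos D); lra.
      rewrite Rmult_assoc, Rinv_l. pose proof (cond_pos eps); pose proof (Rabs_pos D); nra. pose proof (Rabs_pos D); lra. }
    lra. }
  replace (F u v - F x y - (Derive (fun t => F t y) x * (u - x) + Derive (fun t => F x t) y * (v - y)))
    with (F u v - (F x y + Derive (fun t => F t y) x * (u - x) + Derive (fun t => F x t) y * (v - y))) by ring.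
  eapply Rle_trans. exact Hd. simpl.
  assert (D <= Rabs D) by apply RRle_abs.
  replace (m * 1) with m by ring. nra.
Qed.

Lemma cont_comp2 F (u h : R -> R) x : continuity_2d_pt F (u x) (h x) -> continuous u x -> continuous h x ->
  continuous (fun t : R => F (u t) (h t)) x.
Proof. intros HF Hu Hh. apply continuity_pt_filterlim. apply continuity_pt_locally. intros eps.
  destruct (HF eps) as [d Hd].
  assert (Hu2 := proj1 (continuity_pt_locally u x) (proj2 (continuity_pt_filterlim u x) Hu)).
  assert (Hh2 := proj1 (continuity_pt_locally h x) (proj2 (continuity_pt_filterlim h x) Hh)).
  generalize (filter_and _ _ (Hu2 d) (Hh2 d)). apply filter_imp. intros t [H1 H2]. apply Hd; auto. Qed.

Lemma is_derive_comp2 F u h x : smooth2 F -> ex_derive u x -> ex_derive h x ->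
  is_derive (fun t => F (u t) (h t)) x (d1 F (u x) (h x) * Derive u x + d2 F (u x) (h x) * Derive h x).
Proof. intros HF Hu Hh. apply is_derive_Reals. apply derivable_pt_lim_comp_2d.
  apply sm_diff; auto. apply is_derive_Reals, Derive_correct; auto. apply is_derive_Reals, Derive_correct; auto. Qed.

Lemma Cn_comp2 n I F u h : opn I -> smooth2 F -> Cn n I NoJ u -> Cn n I NoJ h -> Cn n I NoJ (fun x => F (u x) (h x)).
Proof. intros O. assert (G : good I NoJ) by (split; auto; intros x []).
  revert F u h; induction n; intros F u h HF Hu Hh.
  - split; [|apply bnd_NoJ]. intros x Hx. apply cont_comp2. apply sm_cont; auto.
    apply (Cn_cont _ _ _ _ _ Hu Hx). apply (Cn_cont _ _ _ _ _ Hh Hx).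
  - pose proof (Cn_S _ _ _ _ Hu) as Hu'. pose proof (Cn_S _ _ _ _ Hh) as Hh'.
    destruct Hu as [Du [_ Cu]]; destruct Hh as [Dh [_ Ch]]. split; [|split].
    + intros x Hx. eexists. apply is_derive_comp2; auto.
    + apply bnd_NoJ.
    + apply (Cn_ext n I NoJ (fun x => d1 F (u x) (h x) * Derive u x + d2 F (u x) (h x) * Derive h x)); auto.
      intros x Hx. symmetry. apply is_derive_unique. apply is_derive_comp2; auto.
      apply Cn_plus; auto; apply Cn_mult; auto; apply IHn; auto. apply sm_d1; auto. apply sm_d2; auto.
Qed.
Lemma btw x y c : Rmin x y <= c <= Rmax x y -> Rabs (c - x) <= Rabs (y - x).
Proof. unfold Rmin, Rmax; destruct (Rle_dec x y); intros; split_Rabs; lra. Qed.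

Lemma btw2 x y c d : Rmin x y <= c <= Rmax x y -> Rabs x < d -> Rabs y < d -> Rabs c < d.
Proof. unfold Rmin, Rmax; destruct (Rle_dec x y); intros; split_Rabs; lra. Qed.

Lemma quot_close A B a b t : B > /2 -> b > /2 -> Rabs (A - a) <= t -> Rabs (B - b) <= t ->
  Rabs (A / B - a / b) <= 4 * t * (Rabs a + Rabs b).
Proof. intros HB Hb H1 H2.
  replace (A / B - a / b) with (((A - a) * b + a * (b - B)) * / (B * b)) by (field; lra).
  rewrite Rabs_mult. rewrite (Rabs_pos_eq (/ (B * b))) by (left; apply Rinv_0_lt_compat; nra).
  assert (Hx : Rabs ((A - a) * b + a * (b - B)) <= t * (Rabs a + Rabs b)).
  { eapply Rle_trans. apply Rabs_triang. rewrite !Rabs_mult. rewrite (Rabs_minus_sym b B).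
    assert (Rabs (A - a) * Rabs b <= t * Rabs b) by (apply Rmult_le_compat_r; [apply Rabs_pos|auto]).
    assert (Rabs a * Rabs (B - b) <= Rabs a * t) by (apply Rmult_le_compat_l; [apply Rabs_pos|auto]).
    lra. }
  assert (Hi : / (B * b) <= 4).
  { replace 4 with (/ (/4)) by field. apply Rinv_le_contravar. lra. nra. }
  assert (0 <= t * (Rabs a + Rabs b)). { eapply Rle_trans; [apply Rabs_pos|exact Hx]. }
  assert (0 <= / (B * b)) by (left; apply Rinv_0_lt_compat; nra).
  pose proof (Rabs_pos ((A - a) * b + a * (b - B))).
  nra. Qed.
Lemma opn_abs d : opn (fun x => Rabs x < d).
Proof. intros x Hx. assert (Hp : 0 < d - Rabs x) by lra. exists (mkposreal _ Hp). simpl. intros y Hy.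
  assert (Rabs y <= Rabs (y - x) + Rabs x) by (replace y with ((y - x) + x) at 1 by ring; apply Rabs_triang). lra. Qed.

Lemma abs_tri y x : Rabs y <= Rabs (y - x) + Rabs x.
Proof. replace y with ((y - x) + x) at 1 by ring; apply Rabs_triang. Qed.

Lemma exd_contpt (h : R -> R) x : ex_derive h x -> continuity_pt h x.
Proof. intros H. apply continuity_pt_filterlim. apply exd_cont; auto. Qed.

Lemma mvt_glob (phi : R -> R) a b : (forall x, ex_derive phi x) ->
  exists c, Rmin a b <= c <= Rmax a b /\ phi b - phi a = Derive phi c * (b - a).
Proof. intros H. apply (MVT_gen phi a b (Derive phi)).
  intros; apply Derive_correct; auto. intros; apply exd_contpt; auto. Qed.

Lemma cont_eps (h : R -> R) x : continuous h x -> forall eps, 0 < eps -> exists d, 0 < d /\ forall y, Rabs (y - x) < d -> Rabs (h y - h x) < eps.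
Proof. intros H eps He. apply continuity_pt_filterlim in H. rewrite continuity_pt_locally in H.
  destruct (locally_abs _ _ (H (mkposreal _ He))) as [d Hd]. exists d. split. apply cond_pos. auto. Qed.

Lemma eps_cont (h : R -> R) x : (forall eps, 0 < eps -> exists d, 0 < d /\ forall y, Rabs (y - x) < d -> Rabs (h y - h x) < eps) -> continuous h x.
Proof. intros H. apply continuity_pt_filterlim. rewrite continuity_pt_locally. intros eps.
  destruct (H eps (cond_pos eps)) as [d [Hd Hd']]. exists (mkposreal _ Hd). intros y Hy. apply Hd'. exact Hy. Qed.

Lemma c2d_eps F x y : continuity_2d_pt F x y -> forall eps, 0 < eps -> exists d, 0 < d /\
  forall u v, Rabs (u - x) < d -> Rabs (v - y) < d -> Rabs (F u v - F x y) < eps.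
Proof. intros H eps He. destruct (H (mkposreal _ He)) as [d Hd]. exists d. split. apply cond_pos. auto. Qed.

Section IFT.
Variable f : R -> R -> R.
Hypothesis Hs : smooth2 f.
Hypothesis H00 : f 0 0 = 0.
Hypothesis Hd2 : d2 f 0 0 = 1.

Lemma ift_rho : exists rho, 0 < rho /\ forall u v, Rabs u < rho -> Rabs v < rho -> d2 f u v > /2.
Proof. destruct (c2d_eps (d2 f) 0 0 (sm_cont _ 0 0 (sm_d2 _ Hs)) (/2) ltac:(lra)) as [d [Hd H]].
  exists d; split; auto. intros u v Hu Hv. specialize (H u v ltac:(rewrite Rminus_0_r; auto) ltac:(rewrite Rminus_0_r; auto)).
  rewrite Hd2 in H. apply Rabs_def2 in H. lra. Qed.

Lemma ift_mono rho : (forall u v, Rabs u < rho -> Rabs v < rho -> d2 f u v > /2) ->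
  forall u v1 v2, Rabs u < rho -> Rabs v1 < rho -> Rabs v2 < rho -> v1 < v2 -> f u v1 < f u v2.
Proof. intros Hr u v1 v2 Hu H1 H2 H12.
  destruct (mvt_glob (fun v => f u v) v1 v2) as [c [Hc E]]. intros; apply sm_ex2; auto.
  rewrite Rmin_left in Hc by lra. rewrite Rmax_right in Hc by lra.
  assert (Rabs c < rho) by (apply Rabs_def1; apply Rabs_def2 in H1; apply Rabs_def2 in H2; lra).
  specialize (Hr u c Hu H). unfold d2 in Hr. nra. Qed.

Lemma ift_mono_le rho : (forall u v, Rabs u < rho -> Rabs v < rho -> d2 f u v > /2) ->
  forall u v1 v2, Rabs u < rho -> Rabs v1 < rho -> Rabs v2 < rho -> v1 <= v2 -> f u v1 <= f u v2.
Proof. intros Hr u v1 v2 Hu H1 H2 H12. destruct (Req_dec v1 v2). subst; lra.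
  left; apply (ift_mono rho); auto; lra. Qed.


Lemma ift_main : exists r r', 0 < r /\ r <= r' /\ exists g : R -> R,
  (forall U, Rabs U < r -> Rabs (g U) < r' /\ f U (g U) = 0) /\
  (forall U V, Rabs U < r -> Rabs V < r' -> f U V = 0 -> V = g U) /\
  g 0 = 0 /\
  (forall U, Rabs U < r -> d2 f U (g U) > /2) /\
  (forall U, Rabs U < r -> is_derive g U (- d1 f U (g U) / d2 f U (g U))) /\
  (forall U, Rabs U < r -> continuous g U).
Proof.
  destruct ift_rho as [rho [Hrho Hr]].
  set (r' := rho / 2).
  assert (Hr'p : 0 < r') by (unfold r'; lra).
  assert (Ha : forall v, Rabs v < r' -> Rabs v < rho) by (intros; unfold r' in *; lra).
  assert (Hr'a : Rabs r' < rho) by (rewrite Rabs_pos_eq; unfold r'; lra).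
  assert (Hr'b : Rabs (- r') < rho) by (rewrite Rabs_Ropp, Rabs_pos_eq; unfold r'; lra).
  assert (H0a : Rabs 0 < rho) by (rewrite Rabs_R0; lra).
  assert (Hpos : f 0 r' > 0).
  { assert (f 0 0 < f 0 r') by (apply (ift_mono rho Hr); auto). lra. }
  assert (Hneg : f 0 (- r') < 0).
  { assert (f 0 (- r') < f 0 0) by (apply (ift_mono rho Hr); auto; lra). lra. }
  destruct (c2d_eps f 0 r' (sm_cont _ _ _ Hs) _ Hpos) as [da [Hda Ea]].
  destruct (c2d_eps f 0 (- r') (sm_cont _ _ _ Hs) (- f 0 (- r')) ltac:(lra)) as [db [Hdb Eb]].
  set (r := Rmin (Rmin da db) r').
  assert (Hrp : 0 < r) by (unfold r; repeat apply Rmin_pos; auto).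
  assert (Hrr' : r <= r') by (unfold r; apply Rmin_r).
  assert (Hrda : r <= da) by (unfold r; eapply Rle_trans; [apply Rmin_l|apply Rmin_l]).
  assert (Hrdb : r <= db) by (unfold r; eapply Rle_trans; [apply Rmin_l|apply Rmin_r]).
  assert (HUr : forall U, Rabs U < r -> Rabs U < rho) by (intros; unfold r' in *; lra).
  assert (Pp : forall U, Rabs U < r -> f U r' > 0).
  { intros U HU. specialize (Ea U r' ltac:(rewrite Rminus_0_r; lra) ltac:(rewrite Rminus_diag, Rabs_R0; lra)).
    apply Rabs_def2 in Ea. lra. }
  assert (Pn : forall U, Rabs U < r -> f U (- r') < 0).
  { intros U HU. specialize (Eb U (- r') ltac:(rewrite Rminus_0_r; lra) ltac:(rewrite Rminus_diag, Rabs_R0; lra)).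
    apply Rabs_def2 in Eb. lra. }
  assert (Ex : forall U, Rabs U < r -> exists V, Rabs V < r' /\ f U V = 0).
  { intros U HU.
    assert (Hc : continuity (fun v => f U v)) by (intros v; apply exd_contpt; apply sm_ex2; auto).
    destruct (IVT_gen (fun v => f U v) (- r') r' 0 Hc) as [x [Hx Fx]].
    { rewrite Rmin_left, Rmax_right; pose proof (Pp U HU); pose proof (Pn U HU); lra. }
    rewrite Rmin_left, Rmax_right in Hx by lra.
    exists x; split; auto. destruct (Req_dec x r') as [E|E]. subst x. specialize (Pp U HU). lra.
    destruct (Req_dec x (- r')) as [E'|E']. subst x. specialize (Pn U HU). lra.
    apply Rabs_def1; lra. }
  assert (Un : forall U V1 V2, Rabs U < r -> Rabs V1 < r' -> Rabs V2 < r' -> f U V1 = 0 -> f U V2 = 0 -> V1 = V2).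
  { intros U V1 V2 HU H1 H2 F1 F2. destruct (Rtotal_order V1 V2) as [L|[E|L]]; auto.
    - pose proof (ift_mono rho Hr U V1 V2 (HUr U HU) (Ha _ H1) (Ha _ H2) L). lra.
    - pose proof (ift_mono rho Hr U V2 V1 (HUr U HU) (Ha _ H2) (Ha _ H1) L). lra. }
  set (g := fun U => epsilon (inhabits 0) (fun V => Rabs V < r' /\ f U V = 0)).
  assert (Sp : forall U, Rabs U < r -> Rabs (g U) < r' /\ f U (g U) = 0).
  { intros U HU. unfold g. apply epsilon_spec. apply Ex; auto. }
  assert (Uq : forall U V, Rabs U < r -> Rabs V < r' -> f U V = 0 -> V = g U).
  { intros U V HU HV FV. destruct (Sp U HU). apply (Un U); auto. }
  assert (Cg : forall U0, Rabs U0 < r -> forall eps, 0 < eps -> exists d, 0 < d /\ forall U, Rabs (U - U0) < d -> Rabs (g U - g U0) < eps).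
  { intros U0 HU0 eps Heps. destruct (Sp U0 HU0) as [Hg0 Fg0]. set (g0 := g U0) in *.
    set (e := Rmin (eps / 2) ((r' - Rabs g0) / 2)).
    assert (He : 0 < e) by (unfold e; apply Rmin_pos; lra).
    assert (He1 : e <= eps / 2) by apply Rmin_l.
    assert (He2 : e <= (r' - Rabs g0) / 2) by apply Rmin_r.
    assert (Hp1 : Rabs (g0 + e) < r') by (apply Rabs_def1; apply Rabs_def2 in Hg0; split_Rabs; lra).
    assert (Hp2 : Rabs (g0 - e) < r') by (apply Rabs_def1; apply Rabs_def2 in Hg0; split_Rabs; lra).
    assert (P1 : f U0 (g0 + e) > 0) by (rewrite <- Fg0; apply (ift_mono rho Hr); auto; lra).
    assert (P2 : f U0 (g0 - e) < 0) by (rewrite <- Fg0; apply (ift_mono rho Hr); auto; lra).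
    destruct (c2d_eps f U0 (g0 + e) (sm_cont _ _ _ Hs) _ P1) as [d1' [Hd1 E1]].
    destruct (c2d_eps f U0 (g0 - e) (sm_cont _ _ _ Hs) (- f U0 (g0 - e)) ltac:(lra)) as [d2' [Hd2' E2]].
    exists (Rmin (Rmin d1' d2') (r - Rabs U0)). split. repeat apply Rmin_pos; lra.
    intros U HU.
    assert (HU1 : Rabs (U - U0) < d1') by (eapply Rlt_le_trans; [exact HU|]; eapply Rle_trans; [apply Rmin_l|apply Rmin_l]).
    assert (HU2 : Rabs (U - U0) < d2') by (eapply Rlt_le_trans; [exact HU|]; eapply Rle_trans; [apply Rmin_l|apply Rmin_r]).
    assert (HU3 : Rabs (U - U0) < r - Rabs U0) by (eapply Rlt_le_trans; [exact HU|]; apply Rmin_r).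
    assert (HUr' : Rabs U < r) by (pose proof (abs_tri U U0); lra).
    specialize (E1 U (g0 + e) HU1 ltac:(rewrite Rminus_diag, Rabs_R0; lra)). apply Rabs_def2 in E1.
    specialize (E2 U (g0 - e) HU2 ltac:(rewrite Rminus_diag, Rabs_R0; lra)). apply Rabs_def2 in E2.
    destruct (Sp U HUr') as [HgU FgU].
    assert (g U < g0 + e).
    { destruct (Rlt_or_le (g U) (g0 + e)) as [L|L]; auto.
      pose proof (ift_mono_le rho Hr U (g0 + e) (g U) (HUr U HUr') (Ha _ Hp1) (Ha _ HgU) L). lra. }
    assert (g0 - e < g U).
    { destruct (Rlt_or_le (g0 - e) (g U)) as [L|L]; auto.
      pose proof (ift_mono_le rho Hr U (g U) (g0 - e) (HUr U HUr') (Ha _ HgU) (Ha _ Hp2) L). lra. }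
    apply Rabs_def1; lra. }
  exists r, r'. split; auto. split; auto. exists g.
  split; [auto|split; [auto|split; [|split; [|split]]]].
  - symmetry. apply Uq. rewrite Rabs_R0; lra. rewrite Rabs_R0; lra. auto.
  - intros U HU. apply Hr; auto. apply Ha. apply Sp; auto.
  - intros U0 HU0. apply is_derive_Reals. intros eps Heps.
    destruct (Sp U0 HU0) as [Hg0 Fg0]. set (g0 := g U0) in *.
    set (a := d1 f U0 g0). set (b := d2 f U0 g0).
    assert (Hb : b > /2) by (unfold b; apply Hr; auto).
    set (t := eps / (8 * (Rabs a + Rabs b) + 1)).
    assert (Ht : 0 < t) by (unfold t; apply Rdiv_lt_0_compat; auto; pose proof (Rabs_pos a); pose proof (Rabs_pos b); lra).
    assert (Ht2 : 4 * t * (Rabs a + Rabs b) < eps).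
    { unfold t. pose proof (Rabs_pos a); pose proof (Rabs_pos b).
      set (s := Rabs a + Rabs b) in *. assert (0 <= s) by (unfold s; lra).
      replace (4 * (eps / (8 * s + 1)) * s) with (eps * (4 * s / (8 * s + 1))) by (field; lra).
      assert (4 * s / (8 * s + 1) < 1).
      { apply (Rmult_lt_reg_r (8 * s + 1)). lra. unfold Rdiv. rewrite Rmult_assoc, Rinv_l by lra. lra. }
      nra. }
    destruct (c2d_eps (d1 f) U0 g0 (sm_cont _ _ _ (sm_d1 _ Hs)) t Ht) as [e1 [He1 E1]].
    destruct (c2d_eps (d2 f) U0 g0 (sm_cont _ _ _ (sm_d2 _ Hs)) t Ht) as [e2 [He2 E2]].
    destruct (Cg U0 HU0 (Rmin e1 e2) ltac:(apply Rmin_pos; auto)) as [e3 [He3 E3]].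
    assert (Hdp : 0 < Rmin (Rmin e1 e3) (r - Rabs U0)) by (repeat apply Rmin_pos; lra).
    exists (mkposreal _ Hdp). simpl. intros h Hh0 Hh.
    assert (Hh1 : Rabs h < e1) by (eapply Rlt_le_trans; [exact Hh|]; eapply Rle_trans; [apply Rmin_l|apply Rmin_l]).
    assert (Hh3 : Rabs h < e3) by (eapply Rlt_le_trans; [exact Hh|]; eapply Rle_trans; [apply Rmin_l|apply Rmin_r]).
    assert (Hh4 : Rabs h < r - Rabs U0) by (eapply Rlt_le_trans; [exact Hh|]; apply Rmin_r).
    assert (HU : Rabs (U0 + h) < r) by (pose proof (abs_tri (U0 + h) U0); replace (U0 + h - U0) with h in * by ring; lra).
    destruct (Sp _ HU) as [Hg1 Fg1]. set (g1 := g (U0 + h)) in *.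
    assert (Hgg : Rabs (g1 - g0) < Rmin e1 e2) by (apply E3; replace (U0 + h - U0) with h by ring; auto).
    assert (Hgg1 : Rabs (g1 - g0) < e1) by (eapply Rlt_le_trans; [exact Hgg|apply Rmin_l]).
    assert (Hgg2 : Rabs (g1 - g0) < e2) by (eapply Rlt_le_trans; [exact Hgg|apply Rmin_r]).
    destruct (mvt_glob (fun u => f u g1) U0 (U0 + h)) as [c1 [Hc1 M1]]. intros; apply sm_ex1; auto.
    destruct (mvt_glob (fun v => f U0 v) g0 g1) as [c2 [Hc2 M2]]. intros; apply sm_ex2; auto.
    pose proof (btw _ _ _ Hc1) as B1. replace (U0 + h - U0) with h in B1 by ring.
    pose proof (btw _ _ _ Hc2) as B2.
    pose proof (btw2 _ _ _ _ Hc2 Hg0 Hg1) as B3.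
    set (A := Derive (fun u => f u g1) c1) in *. set (B := Derive (fun v => f U0 v) c2) in *.
    assert (HB : B > /2) by (apply Hr; auto).
    assert (HA : Rabs (A - a) <= t).
    { left. apply (E1 c1 g1). lra. lra. }
    assert (HB2 : Rabs (B - b) <= t).
    { left. apply (E2 U0 c2). rewrite Rminus_diag, Rabs_R0; lra. lra. }
    assert (Eq : (g1 - g0) / h = - A / B).
    { replace (U0 + h - U0) with h in M1 by ring.
      assert (A * h + B * (g1 - g0) = 0) by lra.
      field_simplify_eq; [lra|split; [lra|auto]]. }
    rewrite Eq. replace (- A / B - - a / b) with (- (A / B - a / b)) by (unfold Rdiv; ring). rewrite Rabs_Ropp.
    eapply Rle_lt_trans. apply (quot_close A B a b t); auto. auto.
  - intros U1 HU1. apply eps_cont. auto.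
Qed.

End IFT.

Lemma lin_deriv (G : R -> R) c t x : ex_derive G (t*x) -> is_derive (fun u => c * G (t*u)) x (c * (t * Derive G (t*x))).
Proof. intros H. auto_derive. auto. rewrite Rmult_1_r. reflexivity. Qed.

Lemma g_smooth f r g : smooth2 f -> 0 < r ->
  (forall U, Rabs U < r -> d2 f U (g U) > /2) ->
  (forall U, Rabs U < r -> is_derive g U (- d1 f U (g U) / d2 f U (g U))) ->
  (forall U, Rabs U < r -> continuous g U) ->
  forall n, Cn n (fun U => Rabs U < r) NoJ g.
Proof. intros Hs Hr Hpos Hder Hc. set (I := fun U => Rabs U < r).
  assert (O : opn I) by apply opn_abs. assert (G : good I NoJ) by (split; auto; intros x []).
  induction n.
  - split; [|apply bnd_NoJ]. auto.
  - split; [|split]. intros x Hx; eexists; apply Hder; auto. apply bnd_NoJ.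
    apply (Cn_ext n I NoJ (fun U => -1 * (d1 f U (g U) * / d2 f U (g U)))); auto.
    intros U HU. symmetry. rewrite (is_derive_unique _ _ _ (Hder U HU)). unfold Rdiv; ring.
    apply Cn_scal; auto. apply Cn_mult; auto.
    apply (Cn_comp2 n I (d1 f) (fun x => x) g); auto. apply sm_d1; auto. apply Cn_id.
    apply Cn_inv; auto. apply (Cn_comp2 n I (d2 f) (fun x => x) g); auto. apply sm_d2; auto. apply Cn_id.
    intros U HU. specialize (Hpos U HU). lra.
Qed.

Section Mdef.
Variable g : R -> R.
Variable r : R.
Hypothesis Hr : 0 < r.
Hypothesis Hg : forall n, Cn n (fun U => Rabs U < r) NoJ g.

Definition M (n : nat) (U : R) := RInt (fun t => t ^ n * Derive_n g (S n) (t * U)) 0 1.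

Lemma Dg_ex j x : Rabs x < r -> ex_derive (Derive_n g j) x.
Proof. intros Hx. destruct (proj1 (Cn_flat (S j) _ _ g) (Hg (S j))) as [H _]. apply H; auto. Qed.

Lemma Dg_cont j x : Rabs x < r -> continuous (Derive_n g j) x.
Proof. intros Hx. apply exd_cont. apply Dg_ex; auto. Qed.

Lemma tx_in t x : 0 <= t <= 1 -> Rabs x < r -> Rabs (t * x) < r.
Proof. intros Ht Hx. rewrite Rabs_mult, (Rabs_pos_eq t) by lra.
  assert (t * Rabs x <= Rabs x) by (pose proof (Rabs_pos x); nra). lra. Qed.

Lemma pow_cont n x : continuous (fun t : R => t ^ n) x.
Proof. apply exd_cont. auto_derive. auto. Qed.

Lemma integrand_cont n y z : Rabs y < r -> 0 <= z <= 1 -> continuous (fun t => t ^ n * Derive_n g (S n) (t * y)) z.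
Proof. intros Hy Hz. apply (continuous_mult (fun t => t ^ n) (fun t => Derive_n g (S n) (t * y))).
  apply pow_cont. apply (continuous_comp (fun t => t * y) (Derive_n g (S n))).
  apply exd_cont. auto_derive. auto. apply Dg_cont. apply tx_in; auto. Qed.

Lemma M_deriv n U : Rabs U < r -> is_derive (M n) U (M (S n) U).
Proof. intros HU.
  assert (HO := opn_abs r).
  assert (E : M (S n) U = RInt (fun t => Derive (fun u => t ^ n * Derive_n g (S n) (t * u)) U) 0 1).
  { unfold M. apply RInt_ext. rewrite Rmin_left, Rmax_right by lra. intros t Ht.
    symmetry. apply is_derive_unique.
    replace (t ^ S n * Derive_n g (S (S n)) (t * U)) with (t ^ n * (t * Derive (Derive_n g (S n)) (t * U))) by (simpl; ring).
    apply lin_deriv. apply Dg_ex. apply tx_in; auto; lra. }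
  rewrite E. unfold M.
  apply (is_derive_RInt_param (fun u t => t ^ n * Derive_n g (S n) (t * u)) 0 1 U).
  - generalize (loc_of_opn _ U HO HU). apply filter_imp. intros x Hx t Ht.
    rewrite Rmin_left, Rmax_right in Ht by lra.
    eexists. apply lin_deriv. apply Dg_ex. apply tx_in; auto.
  - intros t Ht. rewrite Rmin_left, Rmax_right in Ht by lra.
    set (e0 := r - Rabs U).
    assert (He0 : 0 < e0) by (unfold e0; lra).
    set (dl := Rmin 1 (e0 / (r + 2))).
    assert (Hdl : 0 < dl) by (unfold dl; apply Rmin_pos; [lra|apply Rdiv_lt_0_compat; lra]).
    assert (Hdl1 : dl <= 1) by apply Rmin_l.
    assert (Hdl2 : dl <= e0 / (r + 2)) by apply Rmin_r.
    assert (Hdl3 : dl * (r + 2) <= e0).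
    { apply (Rmult_le_compat_r (r + 2)) in Hdl2; [|lra]. unfold Rdiv in Hdl2. rewrite Rmult_assoc, Rinv_l in Hdl2 by lra. lra. }
    assert (Hloc : forall u v, Rabs (u - U) < dl -> Rabs (v - t) < dl -> Rabs (v * u) < r).
    { intros u v Hu Hv. rewrite Rabs_mult.
      assert (Rabs v <= 1 + dl) by (pose proof (abs_tri v t); rewrite (Rabs_pos_eq t) in * by lra; lra).
      assert (Rabs u <= Rabs U + dl) by (pose proof (abs_tri u U); lra).
      assert (Rabs v * Rabs u <= (1 + dl) * (Rabs U + dl)) by (apply Rmult_le_compat; auto; apply Rabs_pos).
      assert (Rabs U <= r) by lra.
      assert (dl * Rabs U <= dl * r) by (apply Rmult_le_compat_l; lra).
      assert (dl * dl <= dl) by nra. unfold e0 in Hdl3. nra. }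
    apply (continuity_2d_pt_ext_loc (fun u v => v ^ n * (v * Derive_n g (S (S n)) (v * u)))).
    { exists (mkposreal _ Hdl). simpl. intros u v Hu Hv. symmetry.
      apply (is_derive_unique _ _ _ (lin_deriv (Derive_n g (S n)) (v ^ n) v u (Dg_ex _ _ (Hloc u v Hu Hv)))). }
    apply continuity_2d_pt_mult.
    + apply (continuity_1d_2d_pt_comp (fun x => x ^ n) (fun u v => v)).
      apply continuity_pt_filterlim. apply pow_cont. apply continuity_2d_pt_id2.
    + apply continuity_2d_pt_mult. apply continuity_2d_pt_id2.
      apply (continuity_1d_2d_pt_comp (Derive_n g (S (S n))) (fun u v => v * u)).
      apply continuity_pt_filterlim. apply Dg_cont. apply tx_in; auto.
      apply continuity_2d_pt_mult. apply continuity_2d_pt_id2. apply continuity_2d_pt_id1.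
  - generalize (loc_of_opn _ U HO HU). apply filter_imp. intros y Hy.
    apply (ex_RInt_continuous (V := R_CompleteNormedModule)). rewrite Rmin_left, Rmax_right by lra. intros z Hz.
    apply integrand_cont; auto.
Qed.

Lemma M_Cn k : forall n, Cn k (fun U => Rabs U < r) NoJ (M n).
Proof. assert (O := opn_abs r). assert (G : good (fun U => Rabs U < r) NoJ) by (split; auto; intros x []).
  induction k; intros n.
  - split; [|apply bnd_NoJ]. intros x Hx. apply exd_cont. eexists. apply M_deriv; auto.
  - split; [|split]. intros x Hx. eexists. apply M_deriv; auto. apply bnd_NoJ.
    apply (Cn_ext k _ NoJ (M (S n))); auto. intros x Hx. symmetry. apply is_derive_unique. apply M_deriv; auto.
Qed.

Lemma M0_id U : Rabs U < r -> g 0 = 0 -> U * M 0 U = g U.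
Proof. intros HU H0.
  assert (Ex : ex_RInt (fun t => t ^ 0 * Derive_n g 1 (t * U)) 0 1).
  { apply (ex_RInt_continuous (V := R_CompleteNormedModule)). rewrite Rmin_left, Rmax_right by lra. intros z Hz. apply integrand_cont; auto. }
  unfold M. transitivity (RInt (fun t => scal U (t ^ 0 * Derive_n g 1 (t * U))) 0 1).
  { rewrite (RInt_scal (V := R_CompleteNormedModule)) by auto. reflexivity. }
  transitivity (RInt (fun t => U * Derive g (t * U)) 0 1).
  { apply RInt_ext. intros; unfold scal; simpl; unfold mult; simpl. rewrite Rmult_1_l. reflexivity. }
  assert (HI : is_RInt (fun t => U * Derive g (t * U)) 0 1 (minus (g (1 * U)) (g (0 * U)))).
  { apply (is_RInt_derive (V := R_CompleteNormedModule) (fun t => g (t * U))).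
  - intros t Ht. rewrite Rmin_left, Rmax_right in Ht by lra.
    auto_derive. apply (Dg_ex 0). apply tx_in; auto. rewrite Rmult_1_l. reflexivity.
  - intros t Ht. rewrite Rmin_left, Rmax_right in Ht by lra.
    apply (continuous_mult (fun _ => U) (fun t => Derive g (t * U))). apply continuous_const.
    apply (continuous_comp (fun t => t * U) (Derive g)). apply exd_cont. auto_derive. auto.
    apply (Dg_cont 1). apply tx_in; auto. }
  rewrite (is_RInt_unique _ _ _ _ HI).
  unfold minus, plus, opp; simpl. rewrite Rmult_1_l, Rmult_0_l, H0. ring.
Qed.

Lemma M0_lin U : Rabs U < r -> (forall V, Rabs V < r -> g V = - V) -> M 0 U = -1.
Proof. intros HU Hl. unfold M. transitivity (RInt (fun _ => -1) 0 1).
  - apply RInt_ext. rewrite Rmin_left, Rmax_right by lra. intros t Ht.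
    simpl. rewrite Rmult_1_l.
    rewrite (Derive_ext_loc _ (fun x => - x)). 
    + apply is_derive_unique. auto_derive; auto.
    + generalize (loc_of_opn _ (t * U) (opn_abs r) (tx_in t U ltac:(lra) HU)). apply filter_imp. auto.
  - rewrite RInt_const. unfold scal; simpl; unfold mult; simpl. ring.
Qed.

End Mdef.

Lemma Ck_to_Cn k I h : Ck_on k I h -> Cn k I NoJ h.
Proof. intros H. apply Cn_flat. split; [|split].
  - intros j x Hj Hx. destruct (H x Hx) as [H1 _]. apply (H1 (S j)). lia.
  - intros x Hx. apply (H x Hx).
  - intros; apply bnd_NoJ. Qed.

Lemma Cn_to_Ck k I J h : Cn k I J h -> Ck_on k I h.
Proof. intros H. apply Cn_flat in H. destruct H as [H1 [H2 _]]. intros x Hx. split; auto.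
  intros [|j] Hj. exact Logic.I. apply H1; auto. Qed.

Lemma Cn_addbnd n I J h : Cn n I NoJ h -> (forall j, (j <= n)%nat -> bnd J (Derive_n h j)) -> Cn n I J h.
Proof. intros H Hb. apply Cn_flat in H. apply Cn_flat. tauto. Qed.

Lemma opn_punct d : opn (fun s => 0 < Rabs s < d).
Proof. intros x [H1 H2]. assert (Hp : 0 < Rmin (Rabs x) (d - Rabs x)) by (apply Rmin_pos; lra).
  exists (mkposreal _ Hp). simpl. intros y Hy.
  pose proof (Rmin_l (Rabs x) (d - Rabs x)). pose proof (Rmin_r (Rabs x) (d - Rabs x)).
  pose proof (abs_tri y x). pose proof (abs_tri x y). pose proof (Rabs_minus_sym y x). lra. Qed.

Lemma opn_neq0 : opn (fun s => s <> 0).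
Proof. intros x Hx. assert (Hp : 0 < Rabs x) by (apply Rabs_pos_lt; auto).
  exists (mkposreal _ Hp). simpl. intros y Hy E. subst y. rewrite Rminus_0_l, Rabs_Ropp in Hy. lra. Qed.

Lemma opn_True : opn (fun _ => True).
Proof. intros x _. exists (mkposreal 1 Rlt_0_1). auto. Qed.

Lemma agree0 (p q : R -> R) e : 0 < e -> continuous p 0 -> continuous q 0 ->
  (forall s, 0 < Rabs s < e -> p s = q s) -> p 0 = q 0.
Proof. intros He Hp Hq Hpq. destruct (Req_dec (p 0) (q 0)) as [E|E]; auto. exfalso.
  set (d := Rabs (p 0 - q 0)). assert (Hd : 0 < d) by (apply Rabs_pos_lt; lra).
  destruct (cont_eps p 0 Hp (d/2) ltac:(lra)) as [dp [Hdp Ep]].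
  destruct (cont_eps q 0 Hq (d/2) ltac:(lra)) as [dq [Hdq Eq]].
  set (s := Rmin (Rmin dp dq) e / 2).
  assert (Hs0 : 0 < Rmin (Rmin dp dq) e) by (repeat apply Rmin_pos; auto).
  pose proof (Rmin_l (Rmin dp dq) e). pose proof (Rmin_r (Rmin dp dq) e).
  pose proof (Rmin_l dp dq). pose proof (Rmin_r dp dq).
  assert (Has : Rabs s = s) by (apply Rabs_pos_eq; unfold s; lra).
  specialize (Ep s ltac:(rewrite Rminus_0_r, Has; unfold s; lra)).
  specialize (Eq s ltac:(rewrite Rminus_0_r, Has; unfold s; lra)).
  rewrite Hpq in Ep by (rewrite Has; unfold s; lra).
  assert (d <= Rabs (q s - p 0) + Rabs (q s - q 0)).
  { unfold d. replace (p 0 - q 0) with (- (q s - p 0) + (q s - q 0)) by ring.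
    eapply Rle_trans. apply Rabs_triang. rewrite Rabs_Ropp. lra. }
  lra. Qed.

Lemma floor_nat k : forall l, 0 <= l -> (forall j, INR j <= l -> (j <= k)%nat) ->
  exists L, INR L <= l /\ forall j, INR j <= l -> (j <= L)%nat.
Proof. induction k; intros l Hl H.
  - exists 0%nat. split. simpl; lra. auto.
  - destruct (Rle_or_lt (INR (S k)) l) as [L|L].
    + exists (S k). split; auto.
    + apply IHk; auto. intros j Hj. specialize (H j Hj). destruct (Nat.eq_dec j (S k)).
      subst; lra. lia. Qed.

Definition Uf (a : R) (phi : R -> R) (s : R) := -4 * a ^ 2 * s * phi s.

Lemma H_gamma a b f sigma phi psi s :
  H a b f (gamma a b sigma phi psi s) = / 2 * f (Uf a phi s) (-4 * b ^ 2 * sigma * s * psi s).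
Proof. unfold H, gamma, Uf, add4, scal4, v1, v2, v3, v4. simpl. f_equal. f_equal; ring. Qed.

Theorem lemma3p5 (a b : R) (f : R -> R -> R) (k : nat) (l sigma : R) (phi : R -> R) :
  0 < a -> 0 < b ->
  smooth2 f -> f 0 0 = 0 ->
  Derive (fun u => f u 0) 0 = 1 -> Derive (fun v => f 0 v) 0 = 1 ->
  (1 <= k)%nat -> l <= INR k ->
  (sigma = 1 \/ sigma = -1) ->
  Ck_on k (fun _ => True) phi -> vanishes_to_order k l phi ->
  exists delta : R, 0 < delta /\
  exists psi : R -> R,
    (forall s, Rabs s < delta -> H a b f (gamma a b sigma phi psi s) = 0) /\
    (forall (delta' : R) (psi' : R -> R), 0 < delta' ->
       (forall s, Rabs s < delta' -> continuous psi' s) ->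
       (forall s, Rabs s < delta' -> H a b f (gamma a b sigma phi psi' s) = 0) ->
       exists eps : R, 0 < eps /\ forall s, Rabs s < eps -> psi' s = psi s) /\
    Ck_on k (fun s => Rabs s < delta) psi /\
    vanishes_to_order_near k l delta psi /\
    ((forall u v, f u v = u + v) ->
       forall s, Rabs s < delta -> psi s = - sigma * (a ^ 2 / b ^ 2) * phi s).
Proof.
  intros Ha Hb Hs Hf0 Hfu Hfv Hk Hlk Hsig Hphi Hvan.
  assert (Hsig0 : sigma <> 0) by (destruct Hsig; subst; lra).
  assert (Hb0 : b <> 0) by lra.
  destruct (ift_main f Hs Hf0 Hfv) as [r [r' [Hr [Hrr' [g [Sp [Uq [G0 [Gpos [Gder Gc]]]]]]]]]].
  pose proof (g_smooth f r g Hs Hr Gpos Gder Gc) as Hg.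
  assert (Phi : Cn k (fun _ => True) NoJ phi) by (apply Ck_to_Cn; auto).
  assert (GT : good (fun _ => True) NoJ) by (split; [apply opn_True|intros x []]).
  assert (UC : Cn k (fun _ => True) NoJ (Uf a phi)).
  { unfold Uf. apply (Cn_mult k _ _ (fun s => -4 * a ^ 2 * s) phi); auto.
    apply (Cn_scal k _ _ (-4 * a ^ 2) (fun s => s)); auto. apply Cn_id. }
  assert (U0 : Uf a phi 0 = 0) by (unfold Uf; ring).
  destruct (cont_eps (Uf a phi) 0 (Cn_cont _ _ _ _ _ UC I) r Hr) as [d2 [Hd2 E2]].
  rewrite U0 in E2.
  assert (UI : forall s, Rabs s < d2 -> Rabs (Uf a phi s) < r).
  { intros s Hs'. specialize (E2 s ltac:(rewrite Rminus_0_r; auto)). rewrite Rminus_0_r in E2. auto. }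
  set (delta := d2 / 2).
  assert (Hdel : 0 < delta) by (unfold delta; lra).
  set (c := a ^ 2 / (b ^ 2 * sigma)).
  set (mU := fun s => M g 0 (Uf a phi s)).
  set (psi := fun s => c * phi s * mU s).
  set (Id2 := fun s => Rabs s < d2).
  assert (G2 : good Id2 NoJ) by (split; [apply opn_abs|intros x []]).
  assert (MU : Cn k Id2 NoJ mU).
  { unfold mU. apply (Cn_comp k (fun U => Rabs U < r) Id2 (M g 0) (Uf a phi)); auto.
    apply opn_abs. apply opn_abs. apply M_Cn; auto.
    apply (Cn_mono k (fun _ => True) Id2 NoJ NoJ); auto. }
  assert (PsiC : Cn k Id2 NoJ psi).
  { unfold psi. apply (Cn_mult k Id2 NoJ (fun s => c * phi s) mU); auto. apply Cn_scal; auto.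
    apply (Cn_mono k (fun _ => True) Id2 NoJ NoJ); auto. }
  assert (Vpsi : forall s, Rabs s < d2 -> -4 * b ^ 2 * sigma * s * psi s = g (Uf a phi s)).
  { intros s Hs'. rewrite <- (M0_id g r Hg) by auto. unfold psi, mU, c, Uf. field. auto. }
  exists delta. split; auto. exists psi. split; [|split; [|split; [|split]]].
  -
    intros s Hs'. rewrite H_gamma. rewrite Vpsi by (unfold delta in Hs'; lra).
    rewrite (proj2 (Sp _ (UI s ltac:(unfold delta in Hs'; lra)))). ring.
  -
    intros delta' psi' Hd' Hc' HH'.
    destruct (cont_eps psi' 0 (Hc' 0 ltac:(rewrite Rabs_R0; lra)) 1 Rlt_0_1) as [e1 [He1 E1]].
    set (K := Rabs (psi' 0) + 1).
    assert (HK : 0 < K) by (unfold K; pose proof (Rabs_pos (psi' 0)); lra).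
    assert (Hbd : forall s, Rabs s < e1 -> Rabs (psi' s) <= K).
    { intros s Hs'. specialize (E1 s ltac:(rewrite Rminus_0_r; auto)). pose proof (abs_tri (psi' s) (psi' 0)). unfold K; lra. }
    set (B4 := 4 * b ^ 2 * K).
    assert (HB4 : 0 < B4) by (unfold B4; assert (0 < b ^ 2) by (apply pow_lt; lra); nra).
    set (eps := Rmin (Rmin delta delta') (Rmin e1 (r' / (B4 + 1)))).
    assert (Heps : 0 < eps) by (unfold eps; repeat apply Rmin_pos; auto; apply Rdiv_lt_0_compat; lra).
    assert (Pe1 : eps <= delta) by (unfold eps; eapply Rle_trans; [apply Rmin_l|apply Rmin_l]).
    assert (Pe2 : eps <= delta') by (unfold eps; eapply Rle_trans; [apply Rmin_l|apply Rmin_r]).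
    assert (Pe3 : eps <= e1) by (unfold eps; eapply Rle_trans; [apply Rmin_r|apply Rmin_l]).
    assert (Pe4 : eps <= r' / (B4 + 1)) by (unfold eps; eapply Rle_trans; [apply Rmin_r|apply Rmin_r]).
    assert (Pst : forall s, 0 < Rabs s < eps -> psi' s = psi s).
    { intros s [Hs0 Hs'].
      assert (Fz : f (Uf a phi s) (-4 * b ^ 2 * sigma * s * psi' s) = 0).
      { specialize (HH' s ltac:(lra)). rewrite H_gamma in HH'. lra. }
      assert (HV : Rabs (-4 * b ^ 2 * sigma * s * psi' s) < r').
      { replace (-4 * b ^ 2 * sigma * s * psi' s) with ((4 * b ^ 2) * (- sigma) * s * psi' s) by ring.
        rewrite !Rabs_mult. rewrite Rabs_Ropp.
        assert (Rabs sigma = 1) by (destruct Hsig; subst; unfold Rabs; destruct Rcase_abs; lra).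
        rewrite H. rewrite (Rabs_pos_eq 4) by lra. rewrite (Rabs_pos_eq (b ^ 2)) by (assert (0 < b ^ 2) by (apply pow_lt; lra); lra).
        specialize (Hbd s ltac:(lra)).
        assert (Hb2 : 0 < b ^ 2) by (apply pow_lt; lra).
        assert (4 * b ^ 2 * 1 * Rabs s * Rabs (psi' s) <= B4 * Rabs s).
        { unfold B4. replace (4 * b ^ 2 * 1 * Rabs s * Rabs (psi' s)) with ((4 * b ^ 2 * Rabs s) * Rabs (psi' s)) by ring.
          replace (4 * b ^ 2 * K * Rabs s) with ((4 * b ^ 2 * Rabs s) * K) by ring.
          apply Rmult_le_compat_l; auto. pose proof (Rabs_pos s); nra. }
        assert (B4 * Rabs s < r').
        { assert (Rabs s < r' / (B4 + 1)) by lra.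
          apply (Rmult_lt_compat_l (B4 + 1)) in H1; [|lra].
          unfold Rdiv in H1. rewrite <- Rmult_assoc, (Rmult_comm (B4 + 1) r'), Rmult_assoc, Rinv_r in H1 by lra.
          pose proof (Rabs_pos s). nra. }
        lra. }
      pose proof (Uq _ _ (UI s ltac:(unfold delta in *; lra)) HV Fz) as E.
      rewrite <- Vpsi in E by (unfold delta in *; lra).
      assert (Hn : -4 * b ^ 2 * sigma * s <> 0).
      { assert (s <> 0) by (intro; subst; rewrite Rabs_R0 in Hs0; lra).
        repeat apply Rmult_integral_contrapositive_currified; auto; try lra; apply pow_nonzero; auto. }
      apply (Rmult_eq_reg_l (-4 * b ^ 2 * sigma * s)); auto. }
    exists eps. split; auto. intros s Hs'.
    destruct (Req_dec s 0) as [E|E].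
    + subst s. apply (agree0 psi' psi eps); auto.
      apply Hc'. rewrite Rabs_R0; lra.
      apply (Cn_cont _ _ _ _ _ PsiC). unfold Id2. rewrite Rabs_R0. lra.
    + apply Pst. split; auto. apply Rabs_pos_lt; auto.
  -
    apply (Cn_to_Ck k _ NoJ). apply (Cn_mono k Id2 _ NoJ NoJ); auto. intros x Hx; unfold Id2, delta in *; lra.
  -
    destruct Hvan as [phib [Hpb [Heq Hbd]]].
    set (P := fun s => 0 < Rabs s < delta).
    assert (GP : good P NoJ) by (split; [apply opn_punct|intros x []]).
    assert (PhB : Cn k (fun s => s <> 0) NoJ phib) by (apply Ck_to_Cn; auto).
    exists (fun s => c * phib s * mU s). split; [|split].
    + apply (Cn_to_Ck k P NoJ). apply (Cn_mult k P NoJ (fun s => c * phib s) mU); auto.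
      apply Cn_scal; auto. apply (Cn_mono k (fun s => s <> 0) P NoJ NoJ); auto.
      intros x [Hx _] E; subst; rewrite Rabs_R0 in Hx; lra.
      apply (Cn_mono k Id2 P NoJ NoJ); auto. intros x Hx; unfold P, Id2, delta in *; lra.
    + intros s [Hs0 Hs']. unfold psi. rewrite Heq. ring. intro E; subst; rewrite Rabs_R0 in Hs0; lra.
    + intros j Hj. destruct (Rlt_or_le l 0) as [Hl|Hl].
      { pose proof (pos_INR j); lra. }
      destruct (floor_nat k l Hl) as [L [HL1 HL2]].
      { intros j' Hj'. apply INR_le. lra. }
      assert (HLk : (L <= k)%nat) by (apply INR_le; lra).
      set (J := fun s => (0 < Rabs s < delta) /\ Rabs s <= 1).
      assert (GPJ : good P J) by (split; [apply opn_punct|intros x [Hx _]; exact Hx]).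
      assert (PB : Cn L (fun s => s <> 0) (fun s => -1 <= s <= 1 /\ s <> 0) phib).
      { apply Cn_addbnd. apply (Cn_le L k); auto.
        intros j' Hj'. destruct (Hbd j') as [Mb HMb]. apply le_INR in Hj'. lra.
        exists Mb. intros x [Hx1 Hx2]. apply HMb; auto. }
      assert (MB : Cn L Id2 (fun s => - delta <= s <= delta) mU).
      { apply Cn_compact. apply opn_abs. intros x Hx. unfold Id2, delta in *. apply Rabs_def1; lra.
        apply (Cn_le L k); auto. }
      assert (PsB : Cn L P J (fun s => c * phib s * mU s)).
      { apply (Cn_mult L P J (fun s => c * phib s) mU); auto. apply Cn_scal; auto.
        apply (Cn_mono L (fun s => s <> 0) P (fun s => -1 <= s <= 1 /\ s <> 0) J phib); [| |exact PB].
        intros x [Hx _] E; subst; rewrite Rabs_R0 in Hx; lra.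
        intros x [[Hx1 Hx2] Hx3]. split. apply Rabs_le_between; auto. intro E; subst; rewrite Rabs_R0 in Hx1; lra.
        apply (Cn_mono L Id2 P (fun s => - delta <= s <= delta) J mU); [| |exact MB].
        intros x Hx; unfold P, Id2, delta in *; lra.
        intros x [[Hx1 Hx2] Hx3]. apply Rabs_le_between. lra. }
      apply Cn_flat in PsB. destruct PsB as [_ [_ PsB]].
      destruct (PsB j (HL2 j Hj)) as [Mx HMx]. exists Mx. intros s Hs1 Hs2. apply HMx. split; auto.
  -
    intros Hlin s Hs'.
    assert (Glin : forall V, Rabs V < r -> g V = - V).
    { intros V HV. symmetry. apply Uq; auto. rewrite Rabs_Ropp; lra. rewrite Hlin; ring. }
    unfold psi, mU. rewrite (M0_lin g r) by (auto; apply UI; unfold delta in Hs'; lra).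
    unfold c. destruct Hsig; subst sigma; field; auto.
Qed.
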